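(* Let $\mathfrak R$ be an iterated graph system satisfying (GR1)–(GR3), with replacement graphs $G_m$. Let $w=w_1\cdots w_m$ and $v=v_1\cdots v_m$ be distinct words in $W_m$ and $k:=|w\wedge v|$. Then $(w,v)\in E(G_m)$ if and only if $(w_k,v_k)\in E(G_1)$ and $(w_i,v_i)\in I_{\mathfrak t(w_k,v_k)}$ for all $k<i\le m$. Furthermore, if $\{w,v\}\in E(G_m)$, then $\mathfrak t(w,v)=\mathfrak t(w_k,v_k)$.
   Context: A graph is a pair $(V,E)$ with $V$ finite non-empty and $E\subseteq V\times V$ such that $(x,y)\in E$ implies $(y,x)\notin E$; write $\{x,y\}\in E$ if $(x,y)\in E$ or $(y,x)\in E$, and the type of an unordered edge is the type of whichever ordered pair lies in the edge set. An iterated graph system (IGS) consists of a connected graph $G_1=(S,E)$, a finite set $\mathcal T$ of types, a surjective typing function $\mathfrak t:E\to\mathcal T$, and for each $t\in\mathcal T$ a non-empty set $I_t\subseteq S\times S$. Let $W_m=S^m$, $[w]_k=w_1\cdots w_k$, and for distinct words $w,v$ of the same length $|w\wedge v|=\min\{k:[w]_k\ne[v]_k\}$. The replacement graphs $G_m=(W_m,E_m)$ with typings (denoted $\mathfrak t$ at every level) are defined recursively: $G_1$ given; $(w,v)\in E_{m+1}$ iff either (1) $[w]_m=[v]_m$ and $(w_{m+1},v_{m+1})\in E$, with type $\mathfrak t(w_{m+1},v_{m+1})$; or (2) $([w]_m,[v]_m)\in E_m$ and $(w_{m+1},v_{m+1})\in I_{\mathfrak t([w]_m,[v]_m)}$,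 with type $\mathfrak t([w]_m,[v]_m)$. Let $I_{t,+}=\{w:(w,v)\in I_t\text{ for some }v\}$, $I_{t,-}=\{v:(w,v)\in I_t\text{ for some }w\}$, $\mathfrak b_t^+(w)=|\{v:(w,v)\in I_t\}|$, $\mathfrak b_t^-(w)=|\{v:(v,w)\in I_t\}|$, $\deg_t^+(w)=|\{v:(w,v)\in E\text{ of type }t\}|$, $\deg_t^-(w)=|\{v:(v,w)\in E\text{ of type }t\}|$. (GR1): $\mathfrak b_t^\star(w)\in\{0,1\}$ for all $t,\star,w$; (GR2): $\mathfrak b_t^\star(w)$ and $\deg_t^\star(w)$ are never simultaneously non-zero; (GR3): $I_{t,-}\cap I_{t,+}=\emptyset$ for all $t$. *)

(* Defs.v *)
From mathcomp Require Import all_boot.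
Set Implicit Arguments. Unset Strict Implicit. Unset Printing Implicit Defensive.

Section IGS.
Variables (S T : finType) (E : rel S) (tp : S -> S -> T) (I : T -> rel S).

Definition is_graph : Prop := forall x y, E x y -> ~~ E y x.

Definition sym_edge : rel S := fun x y => E x y || E y x.
Definition connected_graph : Prop := forall x y, connect sym_edge x y.

(* tp is the typing function; only its values on edges matter.
   Surjectivity of the typing E -> T: *)
Definition typing_surj : Prop := forall t, exists x y, E x y /\ tp x y = t.

Definition I_nonempty : Prop := forall t, exists x y, I t x y.

Definition is_IGS : Prop :=
  [/\ is_graph, connected_graph, typing_surj & I_nonempty].

Definition bplus (t : T) (w : S) : nat := #|[pred v | I t w v]|.
Definition bminus (t : T) (w : S) : nat := #|[pred v | I t v w]|.
Definition degplus (t : T) (w : S) : nat := #|[pred v | E w v && (tp w v == t)]|.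
Definition degminus (t : T) (w : S) : nat := #|[pred v | E v w && (tp v w == t)]|.

Definition GR1 : Prop := forall t w, bplus t w <= 1 /\ bminus t w <= 1.
Definition GR2 : Prop := forall t w,
  ~ (bplus t w != 0 /\ degplus t w != 0) /\ ~ (bminus t w != 0 /\ degminus t w != 0).
(* I_{t,+} = {w | exists v, (w,v) in I_t}, I_{t,-} = {v | exists w, (w,v) in I_t} *)
Definition GR3 : Prop := forall t x,
  ~ ((exists w, I t w x) /\ (exists v, I t x v)).

(* Replacement graphs: words of length m are sequences of size m.
   [gedge m w v] is [Some t] iff (w,v) in E_m with type t, and [None] if
   (w,v) is not an edge of G_m.  Words are decomposed as w = rcons p a,
   i.e. p = [w]_m and a = w_{m+1}. *)
Fixpoint gedge (m : nat) (w v : seq S) : option T :=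
  match m with
  | 0 => None
  | m'.+1 =>
    if m' == 0 then
      (match w, v with
       | [:: a], [:: b] => if E a b then Some (tp a b) else None
       | _, _ => None end)
    else
      (match rev w, rev v with
       | a :: rw, b :: rv =>
         let p := rev rw in let q := rev rv in
         if (p == q) && E a b then Some (tp a b)
         else match gedge m' p q with
              | Some t => if I t a b then Some t else None
              | None => None end
       | _, _ => None end)
  end.

Definition is_edge (m : nat) (w v : seq S) : bool := gedge m w v != None.

Definition utype (x y : S) : T := if E x y then tp x y else tp y x.

(* 0-based index of the first position where w and v differ; the paper's
   |w ^ v| is this index + 1. *)
Definition first_diff (w v : seq S) : nat :=
  find (fun p : S * S => p.1 != p.2) (zip w v).

End IGS.

(* Main.v *)
Require Import Defs.
From mathcomp Require Import all_boot.
From mathcomp Require Import zify.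
Set Implicit Arguments. Unset Strict Implicit.

Section H.
Variables (S T : finType) (E : rel S) (tp : S -> S -> T) (I : T -> rel S).

Lemma fd_sym (w v : seq S) : first_diff w v = first_diff v w.
Proof.
rewrite /first_diff; elim: w v => [|x w IH] [|y v] //=.
by rewrite eq_sym IH.
Qed.

Lemma fd_lt (w v : seq S) : size w = size v -> w != v -> first_diff w v < size w.
Proof.
rewrite /first_diff; elim: w v => [|x w IH] [|y v] //= [hs].
case: (eqVneq x y) => [->|] //=; rewrite eqseq_cons eqxx /= => h; rewrite ltnS; exact: IH.
Qed.

Lemma fd_rcons_eq (p : seq S) a b : a != b -> first_diff (rcons p a) (rcons p b) = size p.
Proof.
rewrite /first_diff => hab; elim: p => [|x p IH] /=; first by rewrite hab.
by rewrite eqxx /= IH.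
Qed.

Lemma fd_rcons_ne (p q : seq S) a b : size p = size q -> p != q ->
  first_diff (rcons p a) (rcons q b) = first_diff p q.
Proof.
rewrite /first_diff; elim: p q => [|x p IH] [|y q] //= [hs].
case: (eqVneq x y) => [->|] //=; rewrite eqseq_cons eqxx /= => h; by rewrite IH.
Qed.

Lemma gedge_rcons m p q a b : gedge E tp I m.+2 (rcons p a) (rcons q b) =
  if (p == q) && E a b then Some (tp a b)
  else match gedge E tp I m.+1 p q with
       | Some t => if I t a b then Some t else None
       | None => None end.
Proof. by rewrite /= !rev_rcons !revK. Qed.

Hypothesis hg : is_graph E.

Lemma Eirr a : E a a = false.
Proof. by apply/negP => h; move: (hg h); rewrite h. Qed.

Lemma gedge_self m p : gedge E tp I m p p = None.
Proof.
elim: m p => [|m IH] p //.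
case: m IH => [|m] IH.
  by case: p => [|a [|c p]] //=; rewrite Eirr.
case/lastP: p => [|p a] //.
by rewrite gedge_rcons Eirr andbF IH.
Qed.

Lemma key x0 m w v t : size w = m.+1 -> size v = m.+1 -> w != v ->
  (gedge E tp I m.+1 w v = Some t <->
   [/\ E (nth x0 w (first_diff w v)) (nth x0 v (first_diff w v)),
        t = tp (nth x0 w (first_diff w v)) (nth x0 v (first_diff w v))
      & forall i, first_diff w v < i < m.+1 -> I t (nth x0 w i) (nth x0 v i)]).
Proof.
elim: m w v t => [|m IH] w v t.
  case: w => [|a [|? ?]] //; case: v => [|b [|? ?]] //= _ _.
  rewrite eqseq_cons andbT => hab; rewrite /first_diff /= hab /=.
  split.
    by case: ifP => // h [<-]; split => // i /andP[h1 h2]; move: h2; rewrite ltnS leqNgt h1.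
  by case=> -> -> _.
case/lastP: w => [|p a] //; case/lastP: v => [|q b] //.
rewrite !size_rcons => -[hp] [hq] hne; rewrite gedge_rcons.
have hpq : size p = size q by rewrite hp hq.
case: (eqVneq p q) => [epq|npq].
  subst q.
  have hab : a != b by apply: contra hne => /eqP ->.
  rewrite fd_rcons_eq // !nth_rcons ltnn eqxx andTb.
  case: ifP => hE.
    split; first by case=> <-; split => // i /andP[h1 h2]; rewrite hp in h1; move: h2; rewrite ltnS leqNgt h1.
    by case=> _ -> _.
  rewrite gedge_self; split => //; by case=> h; rewrite h in hE.
rewrite fd_rcons_ne // andFb.
have hlt := fd_lt hpq npq.
rewrite !nth_rcons hlt -hpq hlt.
move: (IH p q t hp hq npq) => IHpq.
split.
  case hg': (gedge E tp I m.+1 p q) => [t'|] //; case: ifP => // hI [?]; subst t'.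
  have [hE ht hIi] := IHpq.1 hg'.
  split => // i /andP[h1 h2]; rewrite !nth_rcons -hpq.
  case: (ltnP i (size p)) => hi.
    by apply: hIi; rewrite h1 /= -hp.
  have -> : i == size p by rewrite eqn_leq hi andbT hp; move: h2; rewrite ltnS.
  by [].
case=> hE ht hIi.
have hg' : gedge E tp I m.+1 p q = Some t.
  apply/IHpq; split => // i /andP[h1 h2].
  have hi : i < size p by rewrite hp.
  have := hIi i; rewrite !nth_rcons -hpq hi h1 /= => /(_ (leqW h2)).
  by [].
rewrite hg'.
have := hIi (size p); rewrite !nth_rcons -hpq ltnn eqxx hlt /= hp => ->; by [].
Qed.
End H.

Theorem lemma3p7 (S T : finType) (E : rel S) (tp : S -> S -> T) (I : T -> rel S)
  (hIGS : is_IGS E tp I) (h1 : GR1 I) (h2 : GR2 E tp I) (h3 : GR3 I)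
  (x0 : S) (m : nat) (w v : seq S)
  (hw : size w = m) (hv : size v = m) (hwv : w != v) :
  let i0 := first_diff w v in
  let wk := nth x0 w i0 in
  let vk := nth x0 v i0 in
  (is_edge E tp I m w v <->
     (E wk vk /\
      forall i, i0 < i < m -> I (tp wk vk) (nth x0 w i) (nth x0 v i)))
  /\
  (forall t, (gedge E tp I m w v = Some t \/ gedge E tp I m v w = Some t) ->
     t = utype E tp wk vk).
Proof.
case: hIGS => hg _ _ _.
case: m hw hv => [|n] hw hv.
  by move: hwv; case: w hw => //; case: v hv.
move=> i0 wk vk.
split.
  rewrite /is_edge; split.
    case hge: (gedge E tp I n.+1 w v) => [t|] // _.
    by case: ((key tp I hg x0 t hw hv hwv).1 hge) => hE ht hI; subst t.
  case=> hE hI.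
  by rewrite ((key tp I hg x0 (tp wk vk) hw hv hwv).2 _).
move=> t [hge|hge].
  case: ((key tp I hg x0 t hw hv hwv).1 hge) => hE ht _.
  by rewrite /utype hE.
have hvw : v != w by rewrite eq_sym.
case: ((key tp I hg x0 t hv hw hvw).1 hge); rewrite fd_sym -/i0 -/wk -/vk => hE ht _.
have := hg _ _ hE; rewrite /utype => /negbTE ->; by [].
Qed.
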